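(* Let $G=(V,E,w)$ be a weighted undirected graph with $n$ vertices and positive edge weights, let $h,k$ be natural numbers, $\varepsilon>0$, and $c\ge1$ a constant. Let $S\subseteq V$ be obtained by including each vertex independently with probability $\min((c+2)\log n/h,1)$. Let $\tilde d(s,v)$, for $(s,v)\in S\times V$, be estimates satisfying $d(s,v)\le\tilde d(s,v)\le(1+\varepsilon)d^{2h}(s,v)$ for all $(s,v)\in S\times V$. Let $H$ be the weighted graph on vertex set $S$ having an edge $\{s,s'\}$ whenever the estimated distance between $s$ and $s'$ is finite, with weight equal to that estimate, let $H'$ be any $(2k-1)$-spanner of $H$, and for $s\in S$, $v\in V$ define $d_{out}(s,v)=\min_{s'\in S}\big(d_{H'}(s,s')+\tilde d(s',v)\big)$. Then, with high probability (over the choice of $S$), $d(s,v)\le d_{out}(s,v)\le(2k-1)(1+\varepsilon)\,d(s,v)$ for all $(s,v)\in S\times V$.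
   Context: $d(s,v)$ is the weighted distance in $G$, and $d^{h}(s,v)$ is the $h$-hop distance, the minimum weight of an $s$–$v$ path with at most $h$ edges ($\infty$ if none). A $(2k-1)$-spanner of $H$ is a subgraph $H'$ on the same vertex set with $d_{H'}(x,y)\le(2k-1)d_H(x,y)$ for all $x,y$; $d_{H'}(s,s)=0$. Logarithms are base $2$. ''With high probability'' means with probability at least $1-n^{-c}$ (up to constant changes in the exponent). *)

(* Defs.v *)
From HB Require Import structures.
From mathcomp Require Import all_boot all_order all_algebra.
From mathcomp Require Import mathcomp_extra boolp classical_sets functions reals.
From mathcomp Require Import constructive_ereal ereal exp.
Set Implicit Arguments. Unset Strict Implicit. Unset Printing Implicit Defensive.
Import Order.TTheory GRing.Theory Num.Theory.

Local Open Scope classical_set_scope.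
Local Open Scope ring_scope.

Section Defs.
Variables (R : realType) (V : finType).

(* A weighted undirected graph on vertex type V is represented by its weight
   function W : V -> V -> \bar R: {a,b} is an edge iff W a b < +oo (and then
   W a b is its weight); +oo means "no edge". *)
Definition is_edge (W : V -> V -> \bar R) : rel V :=
  fun a b => (W a b < +oo)%E.

(* weight of the walk x :: p (it has size p edges) *)
Definition walk_weight (W : V -> V -> \bar R) (x : V) (p : seq V) : \bar R :=
  (\sum_(e <- zip (x :: p) p) W e.1 e.2)%E.

Definition walks (W : V -> V -> \bar R) (x y : V) : set (seq V) :=
  [set p | path (is_edge W) x p && (last x p == y)].

Definition dist (W : V -> V -> \bar R) (x y : V) : \bar R :=
  ereal_inf [set walk_weight W x p | p in walks W x y].

Definition hop_dist (W : V -> V -> \bar R) (h : nat) (x y : V) : \bar R :=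
  ereal_inf [set walk_weight W x p | p in
               [set p | p \in walks W x y /\ (size p <= h)%N]].

(* The graph H on vertex set S: edge {s,s'} (s <> s' in S) whenever the
   estimated distance between s and s' is finite, with weight that estimate
   (we take the better of the two estimates dt s s', dt s' s). *)
Definition Hgraph (S : {set V}) (dt : V -> V -> \bar R) : V -> V -> \bar R :=
  fun a b => if [&& a \in S, b \in S & a != b]
             then Order.min (dt a b) (dt b a) else +oo%E.

Definition is_spanner (t : R) (S : {set V}) (WH WH' : V -> V -> \bar R) : Prop :=
  [/\ (forall a b, WH' a b = WH a b \/ WH' a b = +oo%E),
      (forall a b, WH' a b = WH' b a) &
      (forall x y, x \in S -> y \in S -> (dist WH' x y <= t%:E * dist WH x y)%E)].

Definition dout (S : {set V}) (WH' : V -> V -> \bar R) (dt : V -> V -> \bar R)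
  (s v : V) : \bar R :=
  ereal_inf [set (dist WH' s s' + dt s' v)%E | s' in [set x | x \in S]].

Definition log2 (x : R) : R := ln x / ln 2.

Definition sample_prob (n h : nat) (c : R) : R :=
  Order.min ((c + 2) * log2 n%:R / h%:R) 1.

(* probability that the random set equals S when every vertex is included
   independently with probability p *)
Definition set_prob (p : R) (S : {set V}) : R :=
  (\prod_(v in S) p) * (\prod_(v in ~: S) (1 - p)).

End Defs.

(* Main.v *)
Require Import Defs.
From HB Require Import structures.
From mathcomp Require Import all_boot all_order all_algebra.
From mathcomp Require Import mathcomp_extra boolp classical_sets functions reals.
From mathcomp Require Import constructive_ereal ereal exp.
From mathcomp Require Import sequences.
From mathcomp Require Import zify ring lra.
Import Order.TTheory GRing.Theory Num.Theory.
Set Implicit Arguments. Unset Strict Implicit. Unset Printing Implicit Defensive.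
Section Graph.
Variables (R : realType) (V : finType).
Local Open Scope ereal_scope.
Implicit Types (W : V -> V -> \bar R) (x y z : V) (p q : seq V).

Lemma ww_nil W x : walk_weight W x [::] = 0.
Proof. by rewrite /walk_weight big_nil. Qed.

Lemma ww_cons W x y p : walk_weight W x (y :: p) = W x y + walk_weight W y p.
Proof. by rewrite /walk_weight /= big_cons. Qed.

Lemma ww_cat W x p1 p2 :
  walk_weight W x (p1 ++ p2) = walk_weight W x p1 + walk_weight W (last x p1) p2.
Proof.
elim: p1 x => [|y p1 IH] x /=; first by rewrite ww_nil add0e.
by rewrite !ww_cons IH addeA.
Qed.

Lemma ww_ge0 W x p : (forall a b, 0 <= W a b) -> 0 <= walk_weight W x p.
Proof. by move=> W0; rewrite /walk_weight; apply: sume_ge0 => t _. Qed.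

Lemma ww_fin W x p : (forall a b, 0 <= W a b) -> path (is_edge W) x p ->
  walk_weight W x p < +oo.
Proof.
move=> W0; elim: p x => [|y p IH] x /=; first by rewrite ww_nil ltey.
case/andP => Hxy Hp; rewrite ww_cons; apply: lte_add_pinfty => //; exact: IH.
Qed.

Lemma walksP W x y p : walks W x y p <-> path (is_edge W) x p /\ last x p = y.
Proof. by rewrite /walks /=; split => [/andP[-> /eqP ->]|[-> ->]] //; rewrite eqxx. Qed.

Lemma walks_cat W x y z p1 p2 : walks W x y p1 -> walks W y z p2 -> walks W x z (p1 ++ p2).
Proof.
move=> /walksP[H1 L1] /walksP[H2 L2]; apply/walksP.
by rewrite cat_path last_cat L1 H1 H2.
Qed.

Lemma dist_le W x y p : walks W x y p -> dist W x y <= walk_weight W x p.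
Proof. by move=> Hp; apply: ereal_inf_lbound; exists p. Qed.

Lemma dist_ge0 W x y : (forall a b, 0 <= W a b) -> 0 <= dist W x y.
Proof. by move=> W0; apply: le_ereal_inf_tmp => _ [p _ <-]; apply: ww_ge0. Qed.

Lemma dist_nowalk W x y : ~ (exists p, walks W x y p) -> dist W x y = +oo.
Proof.
move=> N; apply/ereal_inf_pinfty => z [p Hp _]; exfalso; apply: N; by exists p.
Qed.

Lemma shorten_walk W x p : (forall a b, 0 <= W a b) -> path (is_edge W) x p ->
  exists q, [/\ path (is_edge W) x q, last x q = last x p, uniq (x :: q),
     {subset q <= p} & walk_weight W x q <= walk_weight W x p].
Proof.
move=> W0; have [n Hn] := ubnP (size p); move: Hn.
elim: n p x => [//|n IH] p x Hsz Hp.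
case Hx: (x \in p).
  case/splitPr: Hx Hsz Hp => p1 p2 Hsz.
  rewrite cat_path => /andP[_ /= /andP[_ Hp2]].
  have [|q [Hq Lq Uq Sq Wq]] := IH p2 x _ Hp2.
    by move: Hsz; rewrite size_cat /= addnS ltnS; lia.
  exists q; split => //.
  - by rewrite Lq last_cat.
  - by move=> z /Sq zp2; rewrite mem_cat in_cons zp2 !orbT.
  - rewrite ww_cat ww_cons; apply: (le_trans Wq).
    rewrite addeA; apply: leeDr.
    by rewrite adde_ge0 // ?ww_ge0.
case: p Hsz Hp Hx => [|y p] Hsz Hp Hx.
  by exists [::]; split.
move: Hp => /= /andP[Hxy Hp].
have [|q [Hq Lq Uq Sq Wq]] := IH p y _ Hp; first by [].
exists (y :: q); split => //.
- by rewrite /= Hxy.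
- apply/andP; split; last exact: Uq.
  apply/negP; rewrite in_cons => /orP[/eqP xy|xq]; move: Hx; rewrite in_cons.
    by rewrite xy eqxx.
  by rewrite (Sq _ xq) orbT.
- by move=> z; rewrite !in_cons => /orP[->//|/Sq ->]; rewrite orbT.
- by rewrite !ww_cons; apply: leeD2l.
Qed.


Fixpoint allseq (n : nat) : seq (seq V) :=
  if n is n'.+1 then [::] :: [seq x :: q | x <- enum V, q <- allseq n'] else [:: [::]].

Lemma mem_allseq n p : (size p <= n)%N -> p \in allseq n.
Proof.
elim: n p => [|n IH] [|x p] //= Hs.
rewrite in_cons; apply/orP; right.
apply: (allpairs_f (fun x q => x :: q)); first by rewrite mem_enum.
exact: IH.
Qed.

Lemma list_min (T : eqType) (L : seq T) (P : T -> Prop) (f : T -> \bar R) :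
  (exists2 a, a \in L & P a) ->
  exists a, [/\ a \in L, P a & forall b, b \in L -> P b -> f a <= f b].
Proof.
elim: L => [[a //]|c L IH] H.
have [[a aL Pa]|N] := pselect (exists2 a, a \in L & P a).
  have [m [mL Pm Hm]] := IH (ex_intro2 _ _ a aL Pa).
  have [Pc|nPc] := pselect (P c).
    have [le_cm|lt_mc] := leP (f c) (f m).
      exists c; split => //; first by rewrite in_cons eqxx.
      move=> b; rewrite in_cons => /orP[/eqP->//|bL] Pb.
      exact: le_trans le_cm (Hm _ bL Pb).
    exists m; split => //; first by rewrite in_cons mL orbT.
    move=> b; rewrite in_cons => /orP[/eqP->|bL] Pb; last exact: Hm.
    exact: ltW.
  exists m; split => //; first by rewrite in_cons mL orbT.
  move=> b; rewrite in_cons => /orP[/eqP->|bL] Pb; last exact: Hm.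
  by [].
case: H => a; rewrite in_cons => /orP[/eqP->|aL] Pa; last by exfalso; apply: N; exists a.
exists c; split => //; first by rewrite in_cons eqxx.
move=> b; rewrite in_cons => /orP[/eqP->//|bL] Pb.
by exfalso; apply: N; exists b.
Qed.

Lemma uniq_size (s : seq V) : uniq s -> (size s <= #|V|)%N.
Proof. by move/card_uniqP <-; apply: max_card. Qed.

Lemma dist_attained W x y : (forall a b, 0 <= W a b) ->
  (exists p, walks W x y p) ->
  exists q, [/\ walks W x y q, uniq (x :: q) & walk_weight W x q = dist W x y].
Proof.
move=> W0 [p /walksP[Hp Lp]].
have [p0 [Hp0 Lp0 Up0 _ _]] := shorten_walk W0 Hp.
have szu : forall q, uniq (x :: q) -> q \in allseq #|V|.
  by move=> q /uniq_size /= Hq; apply: mem_allseq; apply: ltnW.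
have [|q [_ [Hq Uq] Hm]] := @list_min _ _
   (fun q => walks W x y q /\ uniq (x :: q)) (walk_weight W x) (ex_intro2 _ _ p0 (szu _ Up0) _).
  by split => //; apply/walksP; rewrite Lp0.
exists q; split => //; apply/le_anti/andP; split; last exact: dist_le.
apply: le_ereal_inf_tmp => _ [p' /walksP[Hp' Lp'] <-].
have [p'' [Hp'' Lp'' Up'' _ Wp'']] := shorten_walk W0 Hp'.
apply: le_trans Wp''; apply: Hm; first exact: szu.
by split => //; apply/walksP; rewrite Lp''.
Qed.

Lemma dist_tri W x y z : (forall a b, 0 <= W a b) ->
  dist W x z <= dist W x y + dist W y z.
Proof.
move=> W0.
have [[p1 H1]|N1] := pselect (exists p, walks W x y p); last first.
  rewrite (dist_nowalk N1) addye ?leey //.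
  by move: (dist_ge0 y z W0); case: (dist W y z).
have [[p2 H2]|N2] := pselect (exists p, walks W y z p); last first.
  rewrite (dist_nowalk N2) addey ?leey //.
  by move: (dist_ge0 x y W0); case: (dist W x y).
have [q1 [Q1 _ E1]] := dist_attained W0 (ex_intro _ _ H1).
have [q2 [Q2 _ E2]] := dist_attained W0 (ex_intro _ _ H2).
rewrite -E1 -E2; apply: le_trans (dist_le (walks_cat Q1 Q2)) _.
by rewrite ww_cat; move: Q1 => /walksP[_ ->].
Qed.

Lemma walk_rev W x y p : (forall a b, W a b = W b a) -> walks W x y p ->
  exists p', walks W y x p' /\ walk_weight W y p' = walk_weight W x p.
Proof.
move=> Ws; elim: p x => [|z p IH] x /walksP[Hp Lp].
  by exists [::]; rewrite -Lp; split => //; apply/walksP.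
move: Hp => /= /andP[Hxz Hp].
have [|p0 [Hp0 Wp0]] := IH z; first by apply/walksP.
exists (p0 ++ [:: x]); split.
  apply: walks_cat Hp0 _; apply/walksP; split => //=.
  by rewrite andbT /is_edge Ws.
rewrite ww_cat Wp0 ww_cons ww_nil adde0; move: Hp0 => /walksP[_ ->].
by rewrite ww_cons Ws addeC.
Qed.

Lemma dist_sym W x y : (forall a b, W a b = W b a) -> dist W x y = dist W y x.
Proof.
move=> Ws.
have H : forall x y, dist W y x <= dist W x y.
  move=> a b; apply: le_ereal_inf_tmp => _ [p Hp <-].
  have [p' [Hp' <-]] := walk_rev Ws Hp; exact: dist_le.
by apply/le_anti; rewrite !H.
Qed.

Lemma dist_chain W W' x y : (forall a b, 0 <= W a b) ->
  (forall a b, is_edge W' a b -> dist W a b <= W' a b) ->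
  dist W x y <= dist W' x y.
Proof.
move=> W0 HW; apply: le_ereal_inf_tmp => _ [p /walksP[Hp <-] <-].
elim: p x Hp => [|z p IH] x /=.
  move=> _; have := @dist_le W x x [::]; rewrite !ww_nil; apply; exact/walksP.
case/andP => Hxz Hp; rewrite ww_cons.
apply: le_trans (dist_tri x z _ W0) _; apply: leeD; [exact: HW | exact: IH].
Qed.

End Graph.

Section Prob.
Variables (R : realType) (V : finType).
Local Open Scope ring_scope.

Lemma set_probE (p : R) (S : {set V}) :
  set_prob p S = \prod_v (if v \in S then p else 1 - p).
Proof.
rewrite /set_prob [RHS](bigID (mem S)) /=; congr (_ * _); apply: eq_big => v //.
- by move=> ->.
- by rewrite !inE.
- by rewrite !inE => /negbTE ->.
Qed.

Lemma sum_prod (g : V -> bool -> R) :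
  \sum_(S : {set V}) \prod_v g v (v \in S) = \prod_v (g v true + g v false).
Proof.
have -> : \prod_v (g v true + g v false) = \prod_v \sum_(b : bool) g v b.
  by apply: eq_bigr => v _; rewrite big_bool.
rewrite bigA_distr_bigA /=.
rewrite (reindex (fun f : {ffun V -> bool} => [set v | f v])) /=.
  by apply: eq_bigr => f _; apply: eq_bigr => v _; rewrite inE.
exists (fun S : {set V} => [ffun v => v \in S]) => [f _|S _].
  by apply/ffunP => v; rewrite ffunE inE.
by apply/setP => v; rewrite inE ffunE.
Qed.

Lemma sum_set_prob (p : R) : \sum_(S : {set V}) set_prob p S = 1.
Proof.
under eq_bigr => S _ do rewrite set_probE.
rewrite (sum_prod (fun v b => if b then p else 1 - p)).
by rewrite big1 // => v _; rewrite addrC subrK.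
Qed.

Lemma set_prob_ge0 (p : R) (S : {set V}) : 0 <= p <= 1 -> 0 <= set_prob p S.
Proof.
case/andP => p0 p1; rewrite set_probE; apply: prodr_ge0 => v _.
by case: ifP => _; rewrite ?subr_ge0.
Qed.

Lemma sum_disjoint (p : R) (A : seq V) : uniq A ->
  \sum_(S : {set V} | [disjoint A & S]) set_prob p S = (1 - p) ^+ size A.
Proof.
move=> uA; rewrite big_mkcond /=.
have -> : \sum_(S : {set V}) (if [disjoint A & S] then set_prob p S else 0) =
    \sum_(S : {set V}) \prod_v
       (fun v b => if b then (if v \in A then 0 else p) else 1 - p) v (v \in S).
  apply: eq_bigr => S _; rewrite set_probE.
  case: ifP => dis.
    apply: eq_bigr => v _; case: ifP => // vS; case: ifP => // vA.
    by rewrite (disjointFr dis vA) in vS.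
  move/negbT: dis; rewrite disjoint_has negbK => /hasP[v vA vS].
  by rewrite (bigD1 v) //= vS vA mul0r.
rewrite (sum_prod (fun v b => if b then (if v \in A then 0 else p) else 1 - p)).
rewrite -(card_uniqP uA) -prodr_const [RHS]big_mkcond /=.
apply: eq_bigr => v _; case: ifP => vA; first by rewrite add0r.
by rewrite addrC subrK.
Qed.

Lemma union_bound (I : finType) (P : {set V} -> R) (good : pred {set V})
    (bad : I -> pred {set V}) :
  (forall S, 0 <= P S) -> \sum_S P S = 1 ->
  (forall S, ~~ good S -> exists i, bad i S) ->
  1 - \sum_i \sum_(S | bad i S) P S <= \sum_(S | good S) P S.
Proof.
move=> P0 P1 Hb.
have -> : \sum_(S | good S) P S = 1 - \sum_(S | ~~ good S) P S.
  by rewrite -P1 (bigID good predT) /= addrK.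
rewrite lerD2l lerN2.
apply: (@le_trans _ _ (\sum_(S | ~~ good S) \sum_i (if bad i S then P S else 0))).
  apply: ler_sum => S nG; have [i bi] := Hb S nG.
  rewrite (bigD1 i) //= bi lerDl; apply: sumr_ge0 => j _; case: ifP => //.
apply: (@le_trans _ _ (\sum_S \sum_i (if bad i S then P S else 0))).
  rewrite [X in _ <= X](bigID (fun S => ~~ good S)) /= lerDl.
  by apply: sumr_ge0 => S _; apply: sumr_ge0 => i _; case: ifP.
rewrite exchange_big /=; apply: ler_sum => i _.
by rewrite [X in _ <= X]big_mkcond.
Qed.

End Prob.

Section NumSec.
Variables (R : realType).
Local Open Scope ring_scope.

Lemma ln2_pos : 0 < ln (2 : R) /\ ln (2 : R) <= 1.
Proof.
split; first by apply: ln_gt0; lra.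
have := @le_ln1Dx R 1; rewrite (_ : 1 + 1 = 2) //; apply; lra.
Qed.

Lemma log2_ge0 (n : nat) : 0 <= log2 (n%:R : R).
Proof.
rewrite /log2; apply: divr_ge0; last by case: ln2_pos => /ltW.
case: n => [|n]; first by rewrite ln0.
by apply: ln_ge0; rewrite ler1n.
Qed.

Lemma sample_prob01 (n h : nat) (c : R) : 1 <= c ->
  0 <= sample_prob n h c <= 1.
Proof.
move=> c1; rewrite /sample_prob; apply/andP; split.
  rewrite le_min ler01 andbT; apply: divr_ge0 => //.
  apply: mulr_ge0; [lra | exact: log2_ge0].
by rewrite ge_min lexx orbT.
Qed.

Lemma numeric (n h : nat) (c : R) : (1 <= h)%N -> 1 <= c ->
  (n%:R) ^+ 2 * (1 - sample_prob n h c) ^+ h <= powR n%:R (- c).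
Proof.
move=> h1 c1.
case: n => [|n]; first by rewrite expr0n /= mul0r powR_ge0.
set N := n.+1.
have N0 : (0 : R) < N%:R by rewrite ltr0n.
rewrite /sample_prob.
set x := (c + 2) * log2 N%:R / h%:R.
have x0 : 0 <= x.
  apply: divr_ge0 => //; apply: mulr_ge0; [lra | exact: log2_ge0].
have [x1|x1] := leP 1 x.
  rewrite subrr expr0n.
  have -> : (h == 0)%N = false by apply/negbTE; rewrite -lt0n.
  by rewrite mulr0 powR_ge0.
have h0 : (0 : R) < h%:R by rewrite ltr0n.
have step1 : (1 - x) ^+ h <= expR (- x) ^+ h.
  apply: lerXn2r; first by rewrite nnegrE subr_ge0 ltW.
    by rewrite nnegrE expR_ge0.
  by have := expR_ge1Dx (- x); rewrite addrC.
have step2 : expR (- x) ^+ h = expR (- ((c + 2) * ln N%:R / ln 2)).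
  rewrite -expRM_natl; congr expR; rewrite /x /log2.
  field; apply/andP; split; last by rewrite pnatr_eq0 -lt0n.
  by case: ln2_pos => /gt_eqF ->.
have lnN : 0 <= ln (N%:R : R) by apply: ln_ge0; rewrite ler1n.
have step3 : expR (- ((c + 2) * ln N%:R / ln 2)) <= expR (- ((c + 2) * ln (N%:R : R))).
  rewrite ler_expR lerN2.
  have [l0 l1] := ln2_pos.
  rewrite ler_pdivlMr //.
  rewrite -[X in _ <= X]mulr1; apply: ler_wpM2l => //.
  apply: mulr_ge0 => //; lra.
have step4 : (N%:R : R) ^+ 2 = expR (2 * ln N%:R).
  by rewrite -[2]/(2%:R) expRM_natl lnK // posrE.
have -> : powR (N%:R : R) (- c) = (N%:R : R) ^+ 2 * expR (- ((c + 2) * ln (N%:R : R))).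
  rewrite /powR (_ : (N%:R == 0 :> R) = false); last by apply/negbTE; rewrite gt_eqF.
  by rewrite step4 -expRD; congr expR; ring.
apply: ler_wpM2l; first by rewrite exprn_ge0 // ltW.
by apply: (le_trans step1); rewrite step2.
Qed.

End NumSec.

Section Main.
Variables (R : realType) (V : finType).
Local Open Scope ereal_scope.
Implicit Types (W : V -> V -> \bar R).

Definition opt_walk W u v (q : seq V) :=
  [/\ walks W u v q, uniq (u :: q) & walk_weight W u q = dist W u v].
Definition canon W u v (q : seq V) :=
  opt_walk W u v q /\ forall q', opt_walk W u v q' -> (size q <= size q')%N.

Lemma canon_ex W u v : (forall a b, 0 <= W a b) ->
  (exists p, walks W u v p) -> exists q, canon W u v q.
Proof.
move=> W0 Hw; have [q0 Hq0] := dist_attained W0 Hw.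
pose P m := `[< exists q, opt_walk W u v q /\ size q = m >].
have exP : exists m, P m by exists (size q0); apply/asboolP; exists q0.
case: (ex_minnP exP) => m /asboolP[q [Hq Sq]] Hmin.
exists q; split => // q' Hq'; rewrite Sq; apply: Hmin; apply/asboolP; by exists q'.
Qed.

Definition qc W u v : seq V :=
  match pselect (exists q, canon W u v q) with
  | left H => proj1_sig (cid H)
  | right _ => [::] end.

Lemma qc_spec W u v : (exists q, canon W u v q) -> canon W u v (qc W u v).
Proof.
rewrite /qc; case: pselect => // H _; exact: (proj2_sig (cid H)).
Qed.

Lemma qc_uniq W u v : uniq (qc W u v).
Proof.
rewrite /qc; case: pselect => // H.
by case: (proj2_sig (cid H)) => -[_ /= /andP[]].
Qed.

Definition bad W (h : nat) (uv : V * V) (S : {set V}) : bool :=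
  (2 * h < size (qc W uv.1 uv.2))%N && [disjoint take h (qc W uv.1 uv.2) & S].

Definition goodS W h (S : {set V}) : bool := [forall uv, ~~ bad W h uv S].

Lemma hop_le W k x y p : walks W x y p -> (size p <= k)%N ->
  hop_dist W k x y <= walk_weight W x p.
Proof.
move=> Hp Hs; apply: ereal_inf_lbound; exists p => //; split => //.
by rewrite in_setE.
Qed.

Lemma claim W h (eps : R) S dt :
  (forall a b, 0 <= W a b) -> (0 < eps)%R -> goodS W h S ->
  (forall s v, s \in S ->
     (dist W s v <= dt s v) /\ (dt s v <= (1 + eps)%:E * hop_dist W (2 * h) s v)) ->
  forall m s v, s \in S -> (size (qc W s v) <= m)%N -> (exists p, walks W s v p) ->
  exists s' (D E : \bar R), [/\ s' \in S, 0 <= D, 0 <= E,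
    (exists pH, walks (Hgraph S dt) s s' pH /\
       walk_weight (Hgraph S dt) s pH <= (1 + eps)%:E * D)
    & dt s' v <= (1 + eps)%:E * E /\ D + E <= dist W s v].
Proof.
move=> W0 eps0 good hdt.
have e0 : 0 <= (1 + eps)%:E by rewrite lee_fin; lra.
elim => [|m IH] s v sS Hm Hw.
all: have [q Hq] := canon_ex W0 Hw.
all: have [[Qw Qu Qd] Qmin] := qc_spec (ex_intro _ _ Hq).
all: set q0 := qc W s v in Hm Qw Qu Qd Qmin.
all: have [small|big] := leqP (size q0) (2 * h).
1,3: exists s, 0, (dist W s v); split => //; [exact: dist_ge0| |split; last by rewrite add0e].
1,3: by exists [::]; split; [apply/walksP| rewrite ww_nil mule0].
1,2: apply: le_trans (hdt s v sS).2 _; apply: lee_wpmul2l => //;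
     rewrite -Qd; exact: hop_le.
  by move: Hm big; rewrite leqn0 => /eqP ->.
have : ~~ bad W h (s, v) S by move/forallP: good => /(_ (s, v)).
rewrite /bad /= -/q0 big /= disjoint_has negbK => /hasP[s1 s1t s1S].
have [p1 [p2 qE]] : exists p1 p2, q0 = p1 ++ s1 :: p2.
  by case/splitPr: (mem_take s1t) => p1 p2; exists p1, p2.
rewrite qE in Qw Qu Qd Hm s1t.
have [sns1 s1p1 U2] : [/\ s != s1, s1 \notin p1 & uniq (s1 :: p2)].
  move: Qu; rewrite /= mem_cat in_cons negb_or negb_or cat_uniq.
  case/and4P => /and3P[_ a1 _] _ /= /norP[a2 _] a3; by split.
have szp1 : (size p1 < h)%N.
  rewrite ltnNge; apply/negP => hp; move: s1t; rewrite take_cat.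
  case: ifP => _; first by move/mem_take; apply/negP.
  rewrite (_ : (h - size p1 = 0)%N); last by apply/eqP; rewrite subn_eq0.
  by rewrite take0 cats0; apply/negP.
set pre := rcons p1 s1.
have qE2 : p1 ++ s1 :: p2 = pre ++ p2 by rewrite cat_rcons.
rewrite qE2 in Qw Qd Hm.
move: (Qw) => /walksP[]; rewrite cat_path last_cat => /andP[Hpre Hp2] Lq.
have Lpre : last s pre = s1 by rewrite last_rcons.
rewrite Lpre in Hp2 Lq.
have Wpre : walks W s s1 pre by apply/walksP.
have Wp2 : walks W s1 v p2 by apply/walksP.
have Qd2 : walk_weight W s pre + walk_weight W s1 p2 = dist W s v.
  by rewrite -Qd ww_cat Lpre.
have prefin : walk_weight W s pre \is a fin_num.
  by rewrite ge0_fin_numE ?ww_ge0 // ww_fin.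
have p2opt : walk_weight W s1 p2 = dist W s1 v.
  apply/le_anti/andP; split; last exact: dist_le.
  have [q' [Hq' _ Eq']] := dist_attained W0 (ex_intro _ _ Wp2).
  rewrite -(leeD2lE _ _ prefin) Qd2 -Eq'.
  by apply: le_trans (dist_le (walks_cat Wpre Hq')) _; rewrite ww_cat Lpre.
have [q1 Hq1] := canon_ex W0 (ex_intro _ _ Wp2).
have [_ Q1min] := qc_spec (ex_intro _ _ Hq1).
have sz1 : (size (qc W s1 v) <= m)%N.
  apply: leq_trans (Q1min p2 _) _; first by split.
  move: Hm; rewrite size_cat size_rcons addSn ltnS => Hm.
  exact: leq_trans (leq_addl (size p1) (size p2)) Hm.
have [s' [D1 [E [s'S D10 E0 [pH1 [HpH1 WpH1]] [Hdt HDE]]]]] :=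
  IH s1 v s1S sz1 (ex_intro _ _ Wp2).
have hopp : hop_dist W (2 * h) s s1 <= walk_weight W s pre.
  apply: hop_le Wpre _; rewrite size_rcons; apply: leq_trans szp1 _.
  by rewrite mul2n -addnn leq_addr.
have Hss1 : Hgraph S dt s s1 <= (1 + eps)%:E * walk_weight W s pre.
  rewrite /Hgraph sS s1S sns1 /=.
  rewrite ge_min; apply/orP; left.
  apply: (le_trans (hdt s s1 sS).2); exact: lee_wpmul2l.
have pre0 : 0 <= walk_weight W s pre by apply: ww_ge0.
exists s', (walk_weight W s pre + D1), E; split => //.
- exact: adde_ge0.
- exists (s1 :: pH1); split.
    move: HpH1 => /walksP[HH LH]; apply/walksP; split => //=.
    rewrite HH andbT /is_edge; apply: le_lt_trans Hss1 _.
    rewrite -ge0_fin_numE; first by apply: fin_numM.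
    exact: mule_ge0.
  rewrite ww_cons ge0_muleDr //; exact: leeD.
- split => //; rewrite -addeA -Qd2 p2opt; exact: leeD2l.
Qed.

End Main.

Unset Implicit Arguments. Set Strict Implicit. Set Printing Implicit Defensive.
Local Open Scope ring_scope.

Theorem mainTheorem11 (R : realType) (V : finType) (W : V -> V -> \bar R)
  (h k : nat) (eps c : R) :
  (forall a b, W a b = W b a) ->
  (forall a b, (0 < W a b)%E) ->
  (1 <= h)%N -> (1 <= k)%N -> 0 < eps -> 1 <= c ->
  exists good : pred {set V},
    (forall S : {set V}, good S ->
       forall dt : V -> V -> \bar R,
         (forall s v, s \in S ->
            (dist W s v <= dt s v)%E /\
            (dt s v <= (1 + eps)%:E * hop_dist W (2 * h) s v)%E) ->
         forall WH' : V -> V -> \bar R,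
           is_spanner (2 * k%:R - 1) S (Hgraph S dt) WH' ->
           forall s v, s \in S ->
             (dist W s v <= dout S WH' dt s v)%E /\
             (dout S WH' dt s v <= ((2 * k%:R - 1) * (1 + eps))%:E * dist W s v)%E)
    /\ 1 - powR (#|V|%:R) (- c)
         <= \sum_(S : {set V} | good S) set_prob (sample_prob #|V| h c) S.
Proof.
move=> Wsym Wpos h1 k1 eps0 c1.
have W0 : forall a b, (0 <= W a b)%E by move=> a b; apply: ltW.
exists (goodS W h); split.
- move=> S good dt hdt WH' [Hsp1 Hsp2 Hsp3] s v sS.
  have T1 : 1 <= 2 * k%:R - 1 :> R.
    have : 1 <= k%:R :> R by rewrite ler1n.
    lra.
  set T := 2 * k%:R - 1 in Hsp3 T1 *.
  have T0 : (0 <= T%:E)%E by rewrite lee_fin; lra.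
  have e0 : (0 <= (1 + eps)%:E)%E by rewrite lee_fin; lra.
  have Te0 : (0 <= (T * (1 + eps))%:E)%E by rewrite lee_fin; nra.
  split.
  + apply: le_ereal_inf_tmp => _ [s' s'S <-].
    apply: le_trans (dist_tri s s' v W0) _.
    apply: leeD; last exact: (hdt s' v s'S).1.
    apply: dist_chain => // a b; rewrite /is_edge => ab.
    case: (Hsp1 a b) => E; last by rewrite E ltxx in ab.
    rewrite E /Hgraph; case: ifP => [/and3P[aS bS _]|_]; last exact: leey.
    rewrite le_min (hdt a b aS).1 /= (dist_sym _ _ Wsym); exact: (hdt b a bS).1.
  + have [Hw|Nw] := pselect (exists p, walks W s v p); last first.
      rewrite (dist_nowalk Nw) gt0_muley ?leey // lte_fin; nra.
    have [s' [D [E [s'S D0 E0 [pH [HpH WpH]] [Hdt HDE]]]]] :=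
      @claim R V W h eps S dt W0 eps0 good hdt _ s v sS (leqnn _) Hw.
    apply: (@le_trans _ _ (dist WH' s s' + dt s' v)%E).
      by apply: ereal_inf_le; exists (dist WH' s s' + dt s' v)%E => //; exists s'.
    have H1 : (dist WH' s s' <= (T * (1 + eps))%:E * D)%E.
      apply: le_trans (Hsp3 s s' sS s'S) _; rewrite EFinM -muleA.
      apply: lee_wpmul2l => //; exact: le_trans (dist_le HpH) WpH.
    have H2 : (dt s' v <= (T * (1 + eps))%:E * E)%E.
      apply: le_trans Hdt _; apply: lee_wpmul2r => //; rewrite lee_fin; nra.
    apply: le_trans (leeD H1 H2) _; rewrite -ge0_muleDr //.
    exact: lee_wpmul2l.
- set p := sample_prob #|V| h c.
  have p01 : 0 <= p <= 1 := sample_prob01 #|V| h c1.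
  apply: le_trans (@union_bound R V _ (set_prob p) (goodS W h) (bad W h) _ _ _); last first.
  + move=> S; rewrite /goodS negb_forall => /existsP[uv]; rewrite negbK => ?; by exists uv.
  + exact: sum_set_prob.
  + by move=> S; apply: set_prob_ge0.
  rewrite lerD2l lerN2.
  apply: (@le_trans _ _ (\sum_(uv : V * V) (1 - p) ^+ h)).
    apply: ler_sum => uv _; rewrite /bad.
    case: (ltnP (2 * h) (size (qc W uv.1 uv.2))) => Hsz /=.
      rewrite sum_disjoint ?take_uniq ?qc_uniq // size_takel //.
      by apply: leq_trans (ltnW Hsz); rewrite mul2n -addnn leq_addr.
    rewrite big_pred0 //; apply: exprn_ge0; rewrite subr_ge0; by case/andP: p01.
  have N := @numeric R #|V| h c h1 c1.
  rewrite sumr_const card_prod.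
  have -> : (1 - p) ^+ h *+ (#|V| * #|V|) = (#|V|%:R) ^+ 2 * (1 - p) ^+ h.
    by rewrite -mulr_natl natrM expr2.
  exact: N.
Qed.
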